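(* Let $V,V'$ be finite-dimensional complex vector spaces, $G\subset GL(V)$, $G'\subset GL(V')$ finite, and $F:V\to V'$ a holomorphic diffeomorphism mapping $G$-orbits onto $G'$-orbits. Let $f:Z=V/G\to Z'=V'/G'$ be the induced holomorphic diffeomorphism of orbit spaces. Then $f$ maps the isotropy type stratification of $Z$ onto that of $Z'$, and $f_*(D_Z)=D_{Z'}$.
   Context: Orbit spaces $V/G$ carry the quotient topology and the sheaf of $G$-invariant holomorphic functions; a holomorphic diffeomorphism of orbit spaces is an isomorphism of these locally ringed spaces. Isotropy type stratification: strata $Z_{(K)}=\pi(V_{(K)})$ where $V_{(K)}$ is the set of points whose isotropy group is conjugate to $K\subset G$. Reflection divisor: for each reflection hyperplane $H$ (fixed hyperplane of a complex reflection in $G$) let $e_H$ be the order of its pointwise stabiliser in $G$; $D_Z=\sum_S e_S\cdot S$, summed over the distinct hypersurfaces $S=\pi(H)$, with $e_S:=e_H$ (independent of $H$). *)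

(* Defs.v *)
From HB Require Import structures.
From mathcomp Require Import all_boot all_order all_algebra.
From mathcomp Require Import all_classical all_reals all_analysis.
From mathcomp Require Import complex.
From mathcomp Require Import finmap.
Import numFieldNormedType.Exports.

Set Implicit Arguments.
Unset Strict Implicit.
Unset Printing Implicit Defensive.

Local Open Scope ring_scope.
Local Open Scope complex_scope.
Local Open Scope classical_set_scope.

(* The complex vector space V = C^n is modelled as column vectors 'cV[R[i]]_n,
   R : realType, so R[i] is the field of complex numbers. *)

Definition fin_linear_group (R : realType) (n : nat) (G : {fset 'M[R[i]]_n}) : Prop :=
  [/\ 1%:M \in G,
      (forall g h, g \in G -> h \in G -> g *m h \in G)
    & (forall g, g \in G -> g \in unitmx)].

(* G-orbit of v; the orbit space Z = V/G is the set of orbits and the quotient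
   map pi : V -> Z is v |-> lin_orbit G v. *)
Definition lin_orbit (R : realType) (n : nat) (G : {fset 'M[R[i]]_n}) (v : 'cV[R[i]]_n)
  : set 'cV[R[i]]_n := [set g *m v | g in [set` G]].

Definition orbit_space (R : realType) (n : nat) (G : {fset 'M[R[i]]_n})
  : set (set 'cV[R[i]]_n) := range (lin_orbit G).

Definition holo_diffeo (R : realType) (n m : nat)
  (F : 'cV[R[i]]_n -> 'cV[R[i]]_m) : Prop :=
  exists Finv : 'cV[R[i]]_m -> 'cV[R[i]]_n,
    [/\ cancel F Finv, cancel Finv F,
        (forall x, differentiable F x) & (forall y, differentiable Finv y)].

Definition induced_map (R : realType) (n m : nat)
  (F : 'cV[R[i]]_n -> 'cV[R[i]]_m) (O : set 'cV[R[i]]_n) : set 'cV[R[i]]_m :=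
  F @` O.

Definition isotropy (R : realType) (n : nat) (G : {fset 'M[R[i]]_n})
  (v : 'cV[R[i]]_n) : {fset 'M[R[i]]_n} :=
  [fset g in G | g *m v == v]%fset.

Definition conj_set (R : realType) (n : nat) (g : 'M[R[i]]_n)
  (K : {fset 'M[R[i]]_n}) : {fset 'M[R[i]]_n} :=
  [fset g *m k *m invmx g | k in K]%fset.

Definition is_subgroup (R : realType) (n : nat) (K G : {fset 'M[R[i]]_n}) : Prop :=
  [/\ (K `<=` G)%fset, 1%:M \in K & (forall g h, g \in K -> h \in K -> g *m h \in K)].

Definition iso_type_set (R : realType) (n : nat) (G K : {fset 'M[R[i]]_n})
  : set 'cV[R[i]]_n :=
  [set v | exists2 g, g \in G & isotropy G v = conj_set g K].

Definition stratum (R : realType) (n : nat) (G K : {fset 'M[R[i]]_n})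
  : set (set 'cV[R[i]]_n) := lin_orbit G @` iso_type_set G K.

Definition strata (R : realType) (n : nat) (G : {fset 'M[R[i]]_n})
  : set (set (set 'cV[R[i]]_n)) :=
  [set stratum G K | K in [set K | is_subgroup K G /\ iso_type_set G K !=set0]].

Definition is_reflection (R : realType) (n : nat) (G : {fset 'M[R[i]]_n})
  (g : 'M[R[i]]_n) : Prop :=
  [/\ g \in G, g != 1%:M & \rank (g - 1%:M) = 1%N].

Definition refl_hyperplane (R : realType) (n : nat) (G : {fset 'M[R[i]]_n})
  (H : set 'cV[R[i]]_n) : Prop :=
  exists2 g, is_reflection G g & H = [set v | g *m v = v].

Definition pointwise_stab (R : realType) (n : nat) (G : {fset 'M[R[i]]_n})
  (H : set 'cV[R[i]]_n) : {fset 'M[R[i]]_n} :=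
  [fset h in G | `[< forall v, H v -> h *m v = v >]]%fset.

Definition e_hyp (R : realType) (n : nat) (G : {fset 'M[R[i]]_n})
  (H : set 'cV[R[i]]_n) : nat := #|` pointwise_stab G H|%fset.

(* The reflection divisor D_Z = sum_S e_S S, represented by its coefficient
   function on subsets T of Z: D_Z(T) = e_H if T = pi(H) for a reflection
   hyperplane H (e_S is independent of the choice of H), and 0 otherwise. *)
Definition refl_divisor (R : realType) (n : nat) (G : {fset 'M[R[i]]_n})
  (T : set (set 'cV[R[i]]_n)) : nat :=
  xget 0%N [set e | exists H, [/\ refl_hyperplane G H, T = lin_orbit G @` H
                                 & e = e_hyp G H]].

(* Main.v *)
Require Import Defs.
From HB Require Import structures.
From mathcomp Require Import all_boot all_order all_algebra.
From mathcomp Require Import all_classical all_reals all_analysis.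
From mathcomp Require Import complex.
From mathcomp Require Import finmap.
Import numFieldNormedType.Exports.
Local Open Scope ring_scope.
Local Open Scope classical_set_scope.
Set Implicit Arguments.
Unset Strict Implicit.
Unset Printing Implicit Defensive.
Import Order.TTheory GRing.Theory Num.Theory.

Lemma pigeon (T : eqType) (s : seq T) (bad : T -> nat -> Prop) :
  (forall t k1 k2, t \in s -> bad t k1 -> bad t k2 -> k1 = k2) ->
  exists k, (k <= size s)%N /\ forall t, t \in s -> ~ bad t k.
Proof.
move=> uniqb; apply: contrapT => /forallNP H.
have H' : forall k : 'I_(size s).+1, exists t, t \in s /\ bad t k.
  move=> k; have /not_andP [|] := H k; first by rewrite -ltnS ltn_ord.
  move=> /existsNP [t /not_implyP [ts bt]]; exists t; split => //.
  exact: contrapT.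
have [f Hf] := choice H'.
have inj : injective f.
  move=> k1 k2 e; apply/val_inj; have [s1 b1] := Hf k1; have [s2 b2] := Hf k2.
  by apply: (uniqb (f k1)) => //; rewrite e.
have : (size (map f (enum 'I_(size s).+1)) <= size s)%N.
  apply: uniq_leq_size; first by rewrite map_inj_uniq ?enum_uniq.
  by move=> t /mapP [k _ ->]; have [] := Hf k.
by rewrite size_map size_enum_ord ltnn.
Qed.

Section Alg.
Variable K : fieldType.

Lemma mx_ext m n (A B : 'M[K]_(m, n)) :
  (forall v : 'cV[K]_n, A *m v = B *m v) -> A = B.
Proof.
move=> H; apply/matrixP => i j.
have := congr1 (fun M : 'cV[K]_m => M i 0) (H (delta_mx j 0)).
by rewrite -!colE !mxE.
Qed.

Lemma mx_neq0_vec m n (A : 'M[K]_(m, n)) : A != 0 -> exists v : 'cV[K]_n, A *m v != 0.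
Proof.
move=> A0; apply: contrapT => /forallNP H; move/eqP: A0; apply.
apply: mx_ext => v; rewrite mul0mx; apply/eqP; have := H v; by case: eqP.
Qed.

Hypothesis Kchar : forall k1 k2 : nat, (k1%:R : K) = k2%:R -> k1 = k2.

Lemma avoid_kernels m n (s : seq 'M[K]_(m, n)) :
  (forall M, M \in s -> M != 0) -> exists v : 'cV[K]_n, forall M, M \in s -> M *m v != 0.
Proof.
elim: s => [|M0 s IH] H0; first by exists 0.
have [a Ha] : exists a : 'cV[K]_n, forall M, M \in s -> M *m a != 0.
  by apply: IH => M Ms; apply: H0; rewrite inE Ms orbT.
have [b Hb] := mx_neq0_vec (H0 M0 (mem_head _ _)).
have [Ma|/negPn/eqP Ma] := boolP (M0 *m a != 0).
  by exists a => M; rewrite inE => /orP [/eqP ->|]//; exact: Ha.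
have Hu : forall M k1 k2, M \in s -> M *m (a + k1.+1%:R *: b) = 0 ->
    M *m (a + k2.+1%:R *: b) = 0 -> k1 = k2.
  move=> M k1 k2 Ms e1 e2.
  have : (k1.+1%:R - k2.+1%:R : K) *: (M *m b) = 0.
    have : M *m (a + k1.+1%:R *: b) - M *m (a + k2.+1%:R *: b) = 0 by rewrite e1 e2 subrr.
    by rewrite !mulmxDr -!scalemxAr opprD addrACA subrr add0r scalerBl.
  move/eqP; rewrite scaler_eq0 subr_eq0 => /orP [/eqP /Kchar []//|/eqP Mb].
  have := e1; rewrite mulmxDr -scalemxAr Mb scaler0 addr0 => Ma'.
  by have := Ha M Ms; rewrite Ma' eqxx.
have [k [_ Hk]] := @pigeon _ s (fun M k => M *m (a + k.+1%:R *: b) = 0) Hu.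
exists (a + k.+1%:R *: b) => M; rewrite inE => /orP [/eqP ->|Ms].
  rewrite mulmxDr Ma add0r -scalemxAr scaler_eq0 negb_or Hb andbT.
  by apply/eqP => /(@Kchar k.+1 0).
by apply/eqP; apply: Hk.
Qed.
End Alg.

Lemma leq_card_imfset (K V : choiceType) (f : K -> V) (A : {fset K}) :
  (#|` (f @` A)%fset| <= #|` A|)%N.
Proof. exact: leq_imfset_card. Qed.

Lemma exists_free (K : fieldType) n (G : {fset 'M[K]_n}) :
  (forall k1 k2 : nat, (k1%:R : K) = k2%:R -> k1 = k2) ->
  exists v : 'cV[K]_n, {in G &, injective (fun g => g *m v)}.
Proof.
move=> Kc.
pose s := seq.filter (fun M => M != 0) [seq g - h | g <- enum_fset G, h <- enum_fset G].
have [v Hv] : exists v : 'cV[K]_n, forall M, M \in s -> M *m v != 0.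
  by apply: avoid_kernels => // M; rewrite mem_filter => /andP[].
exists v => g h gG hG /= e; apply/eqP; apply: contraT => gh.
have : (g - h) \in s.
  rewrite mem_filter subr_eq0 gh /=; apply/allpairsP; exists (g, h) => /=.
  by rewrite gG hG.
by move/Hv; rewrite mulmxBl e subrr eqxx.
Qed.

Section Basic.
Variable R : realType.
Local Notation C := R[i].
Variables (n n' : nat) (G : {fset 'M[C]_n}) (G' : {fset 'M[C]_n'})
  (F : 'cV[C]_n -> 'cV[C]_n') (Finv : 'cV[C]_n' -> 'cV[C]_n).
Hypotheses (FK : cancel F Finv) (FinvK : cancel Finv F)
  (horb : forall v, F @` lin_orbit G v = lin_orbit G' (F v)).

Lemma Cchar : forall k1 k2 : nat, (k1%:R : C) = k2%:R -> k1 = k2.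
Proof. by move=> k1 k2 /eqP; rewrite eqr_nat => /eqP. Qed.

Lemma orb_fwd g v : g \in G -> exists2 h, h \in G' & F (g *m v) = h *m F v.
Proof.
move=> gG; have : lin_orbit G' (F v) (F (g *m v)).
  by rewrite -horb; exists (g *m v) => //; exists g.
by case=> h hG <-; exists h.
Qed.

Lemma orb_bwd h v : h \in G' -> exists2 g, g \in G & F (g *m v) = h *m F v.
Proof.
move=> hG; have : (F @` lin_orbit G v) (h *m F v) by rewrite horb; exists h.
by case=> _ [g gG <-] e; exists g.
Qed.

Lemma horb_inv w : Finv @` lin_orbit G' w = lin_orbit G (Finv w).
Proof.
apply/seteqP; split => x.
  case=> _ [h hG <-] <-; have [g gG e] := orb_bwd (Finv w) hG.
  by exists g => //; rewrite -[LHS]FK e FinvK.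
case=> g gG <-; have [h hG e] := orb_fwd (Finv w) gG.
exists (h *m w); first by exists h.
by move: e; rewrite FinvK => <-; rewrite FK.
Qed.

Lemma orbit_fset v :
  ((fun g => F (g *m v)) @` G)%fset = ((fun h => h *m F v) @` G')%fset.
Proof.
apply/fsetP => w; apply/imfsetP/imfsetP => /= -[k kG ->].
  by have [h hG e] := orb_fwd v kG; exists h.
by have [g gG e] := orb_bwd v kG; exists g.
Qed.

Lemma card_le : (#|` G| <= #|` G'|)%N.
Proof.
have [v Hv] := exists_free G Cchar.
have : #|` ((fun g => F (g *m v)) @` G)%fset| = #|` G|.
  apply/eqP/card_in_imfsetP => g h gG hG /= /(can_inj FK); exact: Hv.
by rewrite orbit_fset => <-; apply: leq_card_imfset.
Qed.

End Basic.
Local Open Scope complex_scope.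
Section T.
Variable R : realType.
Local Notation CC := (R[i] : numFieldType).
Local Notation Mn m n := ('M[R[i]]_(m, n) : normedModType R[i]).
Local Notation Vn n := ('cV[R[i]]_n : normedModType R[i]).

Lemma closed0 n : closed [set (0 : Vn n)].
Proof.
apply: accessible_closed_set1; apply: hausdorff_accessible.
exact: norm_hausdorff.
Qed.

Lemma cont_RC : continuous (fun r : R => (r%:C : CC)).
Proof.
move=> x; apply/cvgrPdist_lt => e e0.
have /andP[/eqP Ie Re0] : (complex.Im e == complex.Im (0:R[i])) && (complex.Re (0:R[i]) < complex.Re e) by rewrite -ltcE.
have := (@cvgrPdist_lt _ _ _ (nbhs x) _ (@id R) x).1 cvg_id (complex.Re e) Re0.
move=> H; apply: (filterS _ (H _)) => t /= Ht.
clear H; case: e e0 Ie Re0 Ht => a b /= e0 -> _ Ht.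
rewrite normc_def /= subrr expr0n addr0 sqrtr_sqr.
by rewrite complexr0 ltcR.
Qed.
Lemma mx_cont_entries (T : topologicalType) m n (f : T -> Mn m n) :
  (forall i j, continuous (fun x => (f x i j : CC))) -> continuous f.
Proof.
move=> H x A /= HA; case: HA => P HP sPA.
have : \forall y \near x, forall ij : 'I_m * 'I_n, P ij.1 ij.2 (f y ij.1 ij.2).
  apply: filter_forall => -[i j] /=; exact: (H i j x (P i j) (HP i j)).
by apply: filterS => y Hy; apply: sPA => i j; exact: (Hy (i, j)).
Qed.
Lemma cont_sum (T : topologicalType) (I : Type) (r : seq I) (f : I -> T -> CC) :
  (forall k, continuous (f k)) -> continuous (fun x => \sum_(k <- r) f k x).
Proof.
move=> H; elim: r => [|a r IH].
  rewrite (_ : (fun x => _) = fun _ => 0); first exact: cst_continuous.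
  by apply/funext => x; rewrite big_nil.
rewrite (_ : (fun x => _) = (f a) + (fun x => \sum_(k <- r) f k x)).
  by move=> x; apply: continuousD; [exact: H|exact: IH].
by apply/funext => x; rewrite big_cons.
Qed.

Lemma cont_mulmx m n p (A : 'M[R[i]]_(m, n)) :
  continuous (fun v : Mn n p => (A *m v : Mn m p)).
Proof.
apply: mx_cont_entries => i j.
rewrite (_ : (fun x => _) = fun v : Mn n p => \sum_k (A i k : CC) * v k j).
  apply: cont_sum => k x; apply: continuousM; first exact: cst_continuous.
  exact: coord_continuous.
by apply/funext => v; rewrite mxE.
Qed.
Definition gam (c s : R) : R[i] := s +i* (c * s * (1 - s)).

Lemma complex_decomp (a b : R) : a +i* b = a%:C + b%:C * 'i%C.
Proof. by apply/eqP; rewrite eq_complex /= !mulr0 !mul0r !mulr1 !subr0 !addr0 add0r !eqxx. Qed.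

Lemma gam_cont c : continuous (fun s : R => (gam c s : CC)).
Proof.
have qc : continuous (fun s : R => c * s * (1 - s)).
  move=> s; apply: continuousM; [apply: continuousM; [exact: cst_continuous|exact: cvg_id]|].
  by apply: continuousB; [exact: cst_continuous|exact: cvg_id].
rewrite (_ : (fun s => _) = (fun s : R => (s%:C : CC)) + (fun s => ((c * s * (1 - s))%:C : CC) * 'i%C)).
  move=> s; apply: continuousD; first exact: cont_RC.
  apply: continuousM; last exact: cst_continuous.
  apply: (@continuous_comp _ _ _ (fun s : R => c * s * (1 - s)) (fun r : R => (r%:C : CC))); [exact: qc|exact: cont_RC].
by apply/funext => s; rewrite /gam complex_decomp.
Qed.

Lemma path_cont n (y d : 'cV[R[i]]_n) c :
  continuous (fun s : R => (y + gam c s *: d : Vn n)).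
Proof.
move=> s; apply: continuousD; first exact: cst_continuous.
apply: (@continuousZr_tmp _ _ _ (fun s : R => (gam c s : CC))); exact: gam_cont.
Qed.
Lemma endpoint n (f : R -> Vn n) : continuous f ->
  (forall s, 0 <= s < 1 -> f s = 0) -> f 1 = 0.
Proof.
move=> fc H.
have := @closed_cvg _ _ (at_left (1 : R)) _ f [set 0] (@closed0 n).
apply; last exact: cvg_at_left_filter (fc 1).
near=> s; apply: H; apply/andP; split.
  by apply/ltW; near: s; apply: nbhs_left_gt.
by near: s; apply: nbhs_left_lt.
Unshelve. all: by end_near.
Qed.
End T.

Section Core.
Variable R : realType.
Local Notation CC := (R[i] : numFieldType).
Local Notation Vn n := ('cV[R[i]]_n : normedModType R[i]).
Variables (n n' : nat) (G : {fset 'M[R[i]]_n}) (G' : {fset 'M[R[i]]_n'})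
  (F : 'cV[R[i]]_n -> 'cV[R[i]]_n') (Finv : 'cV[R[i]]_n' -> 'cV[R[i]]_n).
Hypotheses (FK : cancel F Finv) (FinvK : cancel Finv F)
  (horb : forall v, F @` lin_orbit G v = lin_orbit G' (F v))
  (Fc : continuous (F : Vn n -> Vn n')) (hcard : #|` G| = #|` G'|).

Lemma free_transfer v : {in G &, injective (fun g => g *m v)} ->
  {in G' &, injective (fun h => h *m F v)}.
Proof.
move=> Hv; apply/card_in_imfsetP; rewrite -(orbit_fset horb) -hcard.
apply/card_in_imfsetP => g h gG hG /= /(can_inj FK); exact: Hv.
Qed.

Lemma path_free (y x : 'cV[R[i]]_n) : {in G &, injective (fun g => g *m y)} ->
  exists c : R, forall s, 0 <= s < 1 ->
    {in G &, injective (fun g => g *m (y + gam c s *: (x - y)))}.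
Proof.
move=> Hy; move: (x - y) => d.
pose pairs := [seq (g, h) | g <- enum_fset G, h <- enum_fset G].
pose bad (t : 'M[R[i]]_n * 'M[R[i]]_n) k := t.1 != t.2 /\ exists s : R,
  0 <= s < 1 /\ (t.1 - t.2) *m (y + gam k%:R s *: d) = 0.
have Hu : forall t k1 k2, t \in pairs -> bad t k1 -> bad t k2 -> k1 = k2.
  move=> [g h] k1 k2 /allpairsP [[g1 h1] /= [gG hG [eg eh]]]; subst g1 h1.
  move=> [/= gh [s1 [s1I e1]]] [_ [s2 [s2I e2]]].
  have My : (g - h) *m y != 0.
    apply: contra gh; rewrite mulmxBl subr_eq0 => /eqP e.
    by apply/eqP; apply: Hy.
  have : (gam k1%:R s1 - gam k2%:R s2) *: ((g - h) *m d) = 0.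
    have : (g - h) *m (y + gam k1%:R s1 *: d) - (g - h) *m (y + gam k2%:R s2 *: d) = 0.
      by rewrite e1 e2 subrr.
    by rewrite !mulmxDr -!scalemxAr opprD addrACA subrr add0r scalerBl.
  move/eqP; rewrite scaler_eq0 subr_eq0 => /orP [/eqP eg|/eqP Md]; last first.
    by move: e1; rewrite mulmxDr -scalemxAr Md scaler0 addr0 => /eqP; rewrite (negbTE My).
  move: eg; rewrite /gam => -[es ec]; subst s2.
  have s10 : s1 != 0.
    apply: contra My => /eqP s10; move: e1; rewrite /gam s10 mulr0 mul0r.
    by rewrite (_ : 0 +i* 0 = 0) // scale0r addr0 => ->.
  have sn0 : s1 * (1 - s1) != 0.
    rewrite mulf_eq0 negb_or s10 subr_eq0 /=.
    by case/andP: s1I => _ /lt_eqF; rewrite eq_sym => ->.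
  by move: ec; rewrite -!mulrA => /mulIf => /(_ sn0) /eqP; rewrite eqr_nat => /eqP.
have [k [_ Hk]] := pigeon Hu.
exists k%:R => s sI g h gG hG /= e; apply/eqP; apply: contraT => gh.
exfalso; apply: (Hk (g, h)); first by apply/allpairsP; exists (g, h).
by split => //; exists s; split => //; rewrite mulmxBl e subrr.
Qed.


Lemma equiv g : g \in G -> exists2 g', g' \in G' & forall x, F (g *m x) = g' *m F x.
Proof.
move=> gG; have [y Hy] := exists_free G (@Cchar R).
have [g' g'G e0] := orb_fwd horb y gG.
exists g' => // x; have [c Hc] := path_free x Hy.
pose P s := y + gam c s *: (x - y).
pose Ch h := [set s : R | F (g *m P s) = h *m F (P s)].
have Pc : continuous (P : R -> Vn n) by exact: path_cont.
have Qc h : continuous (fun s : R => (F (g *m P s) - h *m F (P s) : Vn n')).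
  move=> s; apply: continuousB.
    apply: (@continuous_comp _ _ _ (fun s => (g *m P s : Vn n)) (F : Vn n -> Vn n')); last exact: Fc.
    apply: (@continuous_comp _ _ _ (P : R -> Vn n) (fun v : Vn n => (g *m v : Vn n))); first exact: Pc.
    exact: cont_mulmx.
  apply: (@continuous_comp _ _ _ (fun s => (F (P s) : Vn n')) (fun v : Vn n' => (h *m v : Vn n'))); last exact: cont_mulmx.
  apply: (@continuous_comp _ _ _ (P : R -> Vn n) (F : Vn n -> Vn n')); first exact: Pc.
  exact: Fc.
have Chc h : closed (Ch h).
  rewrite (_ : Ch h = (fun s => (F (g *m P s) - h *m F (P s) : Vn n')) @^-1` [set 0]).
    exact: ((continuous_closedP _).1 (Qc h) _ (@closed0 _ n')).
  by apply/seteqP; split => s /=; [move=> ->; rewrite subrr|move/eqP; rewrite subr_eq0 => /eqP].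
have Pfree s : 0 <= s < 1 -> {in G' &, injective (fun h => h *m F (P s))}.
  by move=> sI; apply: free_transfer; exact: Hc.
pose A : set R := `[0, 1[.
have Acon : connected A by apply/connected_intervalP; exact: interval_is_interval.
pose U0 := \bigcup_(h in [set h | h \in G' /\ h != g']) Ch h.
have AE : A `&` Ch g' = A.
  apply: Acon.
  - exists 0; split; first by rewrite /A /= in_itv /= lexx ltr01.
    by rewrite /Ch /P /gam /= mulr0 mul0r (_ : 0 +i* 0 = 0) // scale0r addr0.
  - exists (~` U0).
      apply: closed_openC; apply: closed_bigcup => //.
      by apply: (@sub_finite_set _ _ [set` G']); [move=> h [] | exact: finite_fset].
    apply/seteqP; split => s [As Cs]; split => //.
      have sI : 0 <= s < 1 by move: As; rewrite /A /= in_itv.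
      move=> [h [hG hg] Chs]; move: hg; suff -> : h = g' by rewrite eqxx.
      by apply: (Pfree s sI) => //=; rewrite -Chs -Cs.
    have [h hG eh] := orb_fwd horb (P s) gG.
    have [hg|hg] := eqVneq h g'; first by rewrite /Ch /= eh hg.
    by exfalso; apply: Cs; exists h => //.
  - by exists (Ch g').
have key s : 0 <= s < 1 -> Ch g' s.
  move=> sI; have : A s by rewrite /A /= in_itv.
  by rewrite -AE => -[].
have H1 : F (g *m P 1) - g' *m F (P 1) = 0.
  apply: (@endpoint R n' _ (Qc g')) => s sI.
  by have := key s sI; rewrite /Ch /= => ->; rewrite subrr.
have P1 : P 1 = x.
  by rewrite /P /gam subrr mulr0 (_ : 1 +i* 0 = 1) // scale1r addrC subrK.
by move/eqP: H1; rewrite subr_eq0 P1 => /eqP.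
Qed.
End Core.
Lemma imK (A B : Type) (f : A -> B) (g : B -> A) (X : set A) :
  cancel f g -> g @` (f @` X) = X.
Proof.
move=> fK; apply/seteqP; split => x.
  by case=> _ [y Xy <-] <-; rewrite fK.
by move=> Xx; exists (f x); [exists x|rewrite fK].
Qed.

Section Alg2.
Variable R : realType.
Variables (n n' : nat) (G : {fset 'M[R[i]]_n}) (G' : {fset 'M[R[i]]_n'})
  (F : 'cV[R[i]]_n -> 'cV[R[i]]_n') (Finv : 'cV[R[i]]_n' -> 'cV[R[i]]_n)
  (phi : 'M[R[i]]_n -> 'M[R[i]]_n') (psi : 'M[R[i]]_n' -> 'M[R[i]]_n).
Hypotheses (hGG : fin_linear_group G) (hGG' : fin_linear_group G')
  (FK : cancel F Finv) (FinvK : cancel Finv F)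
  (Hphi : forall g, g \in G -> phi g \in G' /\ forall x, F (g *m x) = phi g *m F x)
  (Hpsi : forall h, h \in G' -> psi h \in G /\ forall y, Finv (h *m y) = psi h *m Finv y).

Lemma phiG g : g \in G -> phi g \in G'. Proof. by case/Hphi. Qed.
Lemma phiE g x : g \in G -> F (g *m x) = phi g *m F x.
Proof. by case/Hphi => _ ->. Qed.
Lemma psiG h : h \in G' -> psi h \in G. Proof. by case/Hpsi. Qed.
Lemma psiE h y : h \in G' -> Finv (h *m y) = psi h *m Finv y.
Proof. by case/Hpsi => _ ->. Qed.

Lemma phiK g : g \in G -> psi (phi g) = g.
Proof.
move=> gG; apply: mx_ext => x.
by rewrite -[x in LHS]FK -psiE ?phiG // -phiE // FK.
Qed.

Lemma psiK h : h \in G' -> phi (psi h) = h.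
Proof.
move=> hG0; apply: mx_ext => y.
by rewrite -[y in LHS]FinvK -phiE ?psiG // -psiE // FinvK.
Qed.

Lemma phi_inj : {in G &, injective phi}.
Proof. by move=> g h gG hG e; rewrite -(phiK gG) e phiK. Qed.

Lemma phiM g h : g \in G -> h \in G -> phi (g *m h) = phi g *m phi h.
Proof.
move=> gG hG0; have [_ GM _] := hGG.
apply: mx_ext => y; rewrite -[y]FinvK -mulmxA -!phiE ?GM //.
by rewrite mulmxA.
Qed.

Lemma phi1 : phi 1%:M = 1%:M.
Proof.
have [G1 _ _] := hGG; apply: mx_ext => y.
by rewrite -[y]FinvK -phiE // !mul1mx.
Qed.

Lemma fix_iff g v : g \in G -> (g *m v = v) <-> (phi g *m F v = F v).
Proof.
move=> gG; rewrite -phiE //; split => [->//|e].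
by rewrite -[LHS]FK e FK.
Qed.

Lemma isotropy_phi v : isotropy G' (F v) = (phi @` isotropy G v)%fset.
Proof.
apply/fsetP => h; rewrite /isotropy; apply/idP/idP.
  rewrite !inE /= => /andP [hG /eqP hv].
  apply/imfsetP; exists (psi h); last by rewrite psiK.
  by rewrite !inE /= psiG //=; apply/eqP/(fix_iff _ (psiG hG)); rewrite psiK.
case/imfsetP => g /=; rewrite !inE /= => /andP [gG /eqP gv] ->.
by rewrite phiG //=; apply/eqP/(fix_iff _ gG).
Qed.

Lemma conj_phi g (K : {fset 'M[R[i]]_n}) : g \in G -> (K `<=` G)%fset ->
  (conj_set g K `<=` G)%fset ->
  (phi @` conj_set g K)%fset = conj_set (phi g) (phi @` K)%fset.
Proof.
move=> gG KG cG; have [_ GM Gu] := hGG; have [_ _ G'u] := hGG'.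
have key k : k \in K -> phi (g *m k *m invmx g) = phi g *m phi k *m invmx (phi g).
  move=> kK; have kG : k \in G by apply: (fsubsetP KG).
  have cGk : g *m k *m invmx g \in G by apply: (fsubsetP cG); apply/imfsetP; exists k.
  have : phi (g *m k *m invmx g) *m phi g = phi g *m phi k.
    by rewrite -!phiM // ?GM // mulmxKV ?Gu.
  by move/(congr1 (mulmx^~ (invmx (phi g)))); rewrite mulmxK ?G'u ?phiG.
apply/fsetP => h; apply/imfsetP/imfsetP => /=.
  case=> _ /imfsetP [k /= kK ->] ->; exists (phi k); last by rewrite key.
  by apply/imfsetP; exists k.
case=> _ /imfsetP [k /= kK ->] ->; exists (g *m k *m invmx g); last by rewrite key.
by apply/imfsetP; exists k.
Qed.

Lemma iso_type_phi (K : {fset 'M[R[i]]_n}) v : (K `<=` G)%fset ->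
  iso_type_set G K v -> iso_type_set G' (phi @` K)%fset (F v).
Proof.
move=> KG [g gG e]; exists (phi g); first exact: phiG.
rewrite isotropy_phi e conj_phi //; rewrite -e.
by apply/fsubsetP => h; rewrite inE => /andP[].
Qed.

Lemma subgroup_phi (K : {fset 'M[R[i]]_n}) : is_subgroup K G -> is_subgroup (phi @` K)%fset G'.
Proof.
move=> [KG K1 KM]; split.
- by apply/fsubsetP => _ /imfsetP [k /= kK ->]; apply: phiG; apply: (fsubsetP KG).
- by apply/imfsetP; exists 1%:M => //; rewrite phi1.
- move=> _ _ /imfsetP [k1 /= k1K ->] /imfsetP [k2 /= k2K ->].
  apply/imfsetP; exists (k1 *m k2); first exact: KM.
  by rewrite phiM //; apply: (fsubsetP KG).
Qed.

Lemma horb_phi v : F @` lin_orbit G v = lin_orbit G' (F v).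
Proof.
apply/seteqP; split => w.
  by case=> _ [g gG <-] <-; exists (phi g); [exact: phiG|rewrite phiE].
case=> h hG <-; exists (psi h *m v); first by exists (psi h) => //; exact: psiG.
by rewrite phiE ?psiG ?psiK.
Qed.


Lemma fix_img g : g \in G -> F @` [set v | g *m v = v] = [set w | phi g *m w = w].
Proof.
move=> gG; apply/seteqP; split => w.
  by case=> v /= /(fix_iff _ gG) e <-.
move=> /= e; exists (Finv w); last exact: FinvK.
by apply/(fix_iff _ gG); rewrite FinvK.
Qed.

Lemma stab_phi (H : set 'cV[R[i]]_n) :
  pointwise_stab G' (F @` H) = (phi @` pointwise_stab G H)%fset.
Proof.
apply/fsetP => h; rewrite /pointwise_stab; apply/idP/idP.
  rewrite !inE /= => /andP [hG /asboolP hH].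
  apply/imfsetP; exists (psi h); last by rewrite psiK.
  rewrite !inE /= psiG //=; apply/asboolP => v Hv.
  by apply/(fix_iff _ (psiG hG)); rewrite psiK //; apply: hH; exists v.
case/imfsetP => g /=; rewrite !inE /= => /andP [gG /asboolP gH] ->.
rewrite phiG //=; apply/asboolP => _ [v Hv <-].
by apply/(fix_iff _ gG); apply: gH.
Qed.

Lemma e_phi (H : set 'cV[R[i]]_n) : e_hyp G' (F @` H) = e_hyp G H.
Proof.
rewrite /e_hyp stab_phi; apply/eqP/card_in_imfsetP => g h.
by rewrite !inE /= => /andP [gG _] /andP [hG _]; apply: phi_inj.
Qed.

Lemma orbH (H : set 'cV[R[i]]_n) :
  lin_orbit G' @` (F @` H) = induced_map F @` (lin_orbit G @` H).
Proof.
apply/seteqP; split => O.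
  by case=> W [v Hv <-] <-; exists (lin_orbit G v); [exists v|rewrite /induced_map horb_phi].
by case=> W [v Hv <-] <-; exists (F v); [exists v|rewrite /induced_map horb_phi].
Qed.

Hypothesis hrank : forall g, g \in G -> \rank (phi g - 1%:M) = \rank (g - 1%:M).

Lemma refl_phi (H : set 'cV[R[i]]_n) : refl_hyperplane G H -> refl_hyperplane G' (F @` H).
Proof.
case=> g [gG g1 rk] ->; exists (phi g); last exact: fix_img.
split; [exact: phiG| |by rewrite hrank].
apply: contra g1 => /eqP e; apply/eqP.
by rewrite -(phiK gG) e -phi1 phiK //; case: hGG.
Qed.

End Alg2.
Lemma lin_mx (K : fieldType) m n (L : {linear 'cV[K]_n -> 'cV[K]_m}) :
  exists A : 'M[K]_(m, n), forall v, L v = A *m v.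
Proof.
exists (\matrix_(i, j) L (delta_mx j 0) i 0) => v.
rewrite {1 2}(matrix_sum_delta v) linear_sum mulmx_sumr; apply: eq_bigr => i _.
rewrite linear_sum mulmx_sumr; apply: eq_bigr => j _.
rewrite linearZ -scalemxAr; congr (_ *: _); rewrite (ord1 j) -colE.
by apply/matrixP => k l; rewrite !mxE (ord1 l).
Qed.

Section Deriv.
Variable R : realType.
Local Notation Vn n := ('cV[R[i]]_n : normedModType R[i]).
Variables (n n' : nat) (F : Vn n -> Vn n') (Finv : Vn n' -> Vn n) (g : 'M[R[i]]_n) (h : 'M[R[i]]_n').
Hypotheses (FK : cancel F Finv) (FinvK : cancel Finv F)
  (dF : differentiable F 0) (dFinv : differentiable Finv (F 0))
  (Hgh : forall x, F (g *m x) = h *m F x).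

Lemma rank_le : (\rank (h - 1%:M)%R <= \rank (g - 1%:M)%R)%N.
Proof.
have mcg : continuous (fun v : Vn n => (g *m v : Vn n)) by exact: cont_mulmx.
have mch : continuous (fun v : Vn n' => (h *m v : Vn n')) by exact: cont_mulmx.
have dg : 'd (fun v : Vn n => (g *m v : Vn n)) 0 = (fun v : Vn n => (g *m v : Vn n)) :> (Vn n -> Vn n).
  exact: (@diff_lin _ _ _ (mulmx g)).
have dgx : differentiable (fun v : Vn n => (g *m v : Vn n)) 0.
  exact: (@linear_differentiable _ _ _ (mulmx g)).
have dh : 'd (fun v : Vn n' => (h *m v : Vn n')) (F 0) = (fun v : Vn n' => (h *m v : Vn n')) :> (Vn n' -> Vn n').
  exact: (@diff_lin _ _ _ (mulmx h)).
have dhx : differentiable (fun v : Vn n' => (h *m v : Vn n')) (F 0).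
  exact: (@linear_differentiable _ _ _ (mulmx h)).
have did m (x : Vn m) : 'd (@idfun (Vn m)) x = idfun :> (Vn m -> Vn m).
  by apply: (@diff_lin _ _ _ idfun) => y.
have Lg v : 'd F 0 (g *m v) = h *m 'd F 0 v.
  have eF : F \o (fun v : Vn n => (g *m v : Vn n)) = (fun v : Vn n' => (h *m v : Vn n')) \o F.
    by apply/funext => x /=; rewrite Hgh.
  have dF' : differentiable F (g *m (0 : Vn n) : Vn n) by rewrite mulmx0.
  have E1 := diff_comp dgx dF'.
  have E2 := diff_comp dF dhx.
  have E3 := congr1 (fun f : Vn n -> Vn n' => ('d f 0 : Vn n -> Vn n')) eF.
  have := congr1 (fun f => f v) (etrans (esym E1) (etrans E3 E2)) => /=.
  have dgv := congr1 (fun f => f v) dg; have dhv := congr1 (fun f => f ('d F 0 v)) dh.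
  simpl in dgv, dhv; rewrite dgv dhv.
  by rewrite mulmx0.
have MLK v : 'd Finv (F 0) ('d F 0 v) = v.
  have eF : Finv \o F = idfun by apply/funext => x /=; rewrite FK.
  have E3 := congr1 (fun f : Vn n -> Vn n => ('d f 0 : Vn n -> Vn n)) eF.
  exact: (congr1 (fun f => f v) (etrans (esym (diff_comp dF dFinv)) (etrans E3 (did n 0)))).
have LMK w : 'd F 0 ('d Finv (F 0) w) = w.
  have eF : F \o Finv = idfun by apply/funext => x /=; rewrite FinvK.
  have dF' : differentiable F (Finv (F 0)) by rewrite FK.
  have E3 := congr1 (fun f : Vn n' -> Vn n' => ('d f (F 0) : Vn n' -> Vn n')) eF.
  have := congr1 (fun f => f w) (etrans (esym (diff_comp dFinv dF')) (etrans E3 (did n' (F 0)))).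
  by rewrite /= FK.
have [A HA] := lin_mx ('d F 0).
have [B HB] := lin_mx ('d Finv (F 0)).
have AB : A *m B = 1%:M.
  by apply: mx_ext => w; rewrite mul1mx -mulmxA -HB -HA LMK.
have Ag : A *m g = h *m A.
  by apply: mx_ext => v; rewrite -!mulmxA -!HA Lg.
have -> : (h - 1%:M = A *m (g - 1%:M) *m B)%R.
  by rewrite mulmxBr mulmxBl mulmx1 AB Ag -mulmxA AB mulmx1.
exact: leq_trans (mxrankM_maxl _ _) (mxrankM_maxr _ _).
Qed.
End Deriv.
Section Glue1.
Variable R : realType.
Variables (n n' : nat) (G : {fset 'M[R[i]]_n}) (G' : {fset 'M[R[i]]_n'})
  (F : 'cV[R[i]]_n -> 'cV[R[i]]_n') (Finv : 'cV[R[i]]_n' -> 'cV[R[i]]_n)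
  (phi : 'M[R[i]]_n -> 'M[R[i]]_n') (psi : 'M[R[i]]_n' -> 'M[R[i]]_n).
Hypotheses (hGG : fin_linear_group G) (hGG' : fin_linear_group G')
  (FK : cancel F Finv) (FinvK : cancel Finv F)
  (Hphi : forall g, g \in G -> phi g \in G' /\ forall x, F (g *m x) = phi g *m F x)
  (Hpsi : forall h, h \in G' -> psi h \in G /\ forall y, Finv (h *m y) = psi h *m Finv y)
  (hrank : forall g, g \in G -> \rank (phi g - 1%:M) = \rank (g - 1%:M))
  (hrank' : forall h, h \in G' -> \rank (psi h - 1%:M) = \rank (h - 1%:M)).

Lemma psiphiK (K : {fset 'M[R[i]]_n}) : (K `<=` G)%fset -> (psi @` (phi @` K))%fset = K.
Proof.
move=> KG; apply/fsetP => k; apply/imfsetP/idP => /=.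
  case=> _ /imfsetP [k' /= k'K ->] ->.
  by rewrite (phiK FK Hphi Hpsi) //; apply: (fsubsetP KG).
move=> kK; exists (phi k); first by apply/imfsetP; exists k.
by rewrite (phiK FK Hphi Hpsi) //; apply: (fsubsetP KG).
Qed.

Lemma stratum_img (K : {fset 'M[R[i]]_n}) : is_subgroup K G ->
  induced_map F @` stratum G K = stratum G' (phi @` K)%fset.
Proof.
move=> KS; have [KG _ _] := KS.
have [KG'' _ _] : is_subgroup (phi @` K)%fset G'.
  by apply: (subgroup_phi hGG FinvK Hphi) => //.
apply/seteqP; split => O.
  case=> _ [v Vv <-] <-; exists (F v).
    by apply: (iso_type_phi hGG hGG' FK FinvK Hphi Hpsi) => //.
  by rewrite /induced_map (horb_phi FinvK Hphi Hpsi).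
case=> w Vw <-.
have Vw' : iso_type_set G (psi @` (phi @` K))%fset (Finv w).
  by apply: (iso_type_phi hGG' hGG FinvK FK Hpsi Hphi) => //.
rewrite psiphiK // in Vw'.
exists (lin_orbit G (Finv w)); first by exists (Finv w).
by rewrite /induced_map (horb_phi FinvK Hphi Hpsi) // FinvK.
Qed.

Lemma strata_fwd S : strata G S -> strata G' (induced_map F @` S).
Proof.
case=> K [KS [v Vv]] <-; exists (phi @` K)%fset; last by rewrite stratum_img.
split; first by apply: (subgroup_phi hGG FinvK Hphi) => //.
exists (F v); apply: (iso_type_phi hGG hGG' FK FinvK Hphi Hpsi) => //.
by case: KS.
Qed.

Lemma div_fwd T e :
  [set e | exists H, [/\ refl_hyperplane G H, T = lin_orbit G @` H & e = e_hyp G H]] e ->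
  [set e | exists H, [/\ refl_hyperplane G' H, induced_map F @` T = lin_orbit G' @` H
     & e = e_hyp G' H]] e.
Proof.
case=> H [rH -> ->]; exists (F @` H); split.
- by apply: (refl_phi hGG FK FinvK Hphi Hpsi hrank) => //.
- by rewrite (orbH FinvK Hphi Hpsi).
- by rewrite (e_phi FK FinvK Hphi Hpsi).
Qed.

End Glue1.

Unset Implicit Arguments.
Local Close Scope complex_scope.

Theorem corollary5p2 (R : realType) (n n' : nat)
  (G : {fset 'M[R[i]]_n}) (G' : {fset 'M[R[i]]_n'})
  (F : 'cV[R[i]]_n -> 'cV[R[i]]_n') :
  fin_linear_group G -> fin_linear_group G' ->
  holo_diffeo F ->
  (forall v, F @` lin_orbit G v = lin_orbit G' (F v)) ->
  (* f maps the isotropy type stratification of Z onto that of Z' *)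
  ((forall S, strata G S -> strata G' (induced_map F @` S)) /\
   (forall S', strata G' S' -> exists2 S, strata G S & S' = induced_map F @` S)) /\
  (* f_*(D_Z) = D_Z' *)
  (forall T, T `<=` orbit_space G ->
     refl_divisor G' (induced_map F @` T) = refl_divisor G T).
Proof.
move=> hGG hGG' [Finv [FK FinvK dF dFinv]] horb.
have Fc : continuous (F : ('cV[R[i]]_n : normedModType R[i]) -> ('cV[R[i]]_n' : normedModType R[i])).
  by move=> x; apply: differentiable_continuous; exact: dF.
have Finvc : continuous (Finv : ('cV[R[i]]_n' : normedModType R[i]) -> ('cV[R[i]]_n : normedModType R[i])).
  by move=> x; apply: differentiable_continuous; exact: dFinv.
have horb' := horb_inv FK FinvK horb.
have hcard : #|` G| = #|` G'|.
  by apply/eqP; rewrite eqn_leq (card_le FK horb) (card_le FinvK horb').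
have [phi Hphi] : exists phi : 'M[R[i]]_n -> 'M[R[i]]_n', forall g, g \in G ->
    phi g \in G' /\ forall x, F (g *m x) = phi g *m F x.
  have : forall g : 'M[R[i]]_n, exists g' : 'M[R[i]]_n', g \in G ->
      g' \in G' /\ forall x, F (g *m x) = g' *m F x.
    move=> g; case: (boolP (g \in G)) => gG; last by exists 0.
    by have [g' g'G e] := equiv FK horb Fc hcard gG; exists g'.
  by case/choice => phi Hphi; exists phi.
have [psi Hpsi] : exists psi : 'M[R[i]]_n' -> 'M[R[i]]_n, forall h, h \in G' ->
    psi h \in G /\ forall y, Finv (h *m y) = psi h *m Finv y.
  have : forall h : 'M[R[i]]_n', exists h' : 'M[R[i]]_n, h \in G' ->
      h' \in G /\ forall y, Finv (h *m y) = h' *m Finv y.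
    move=> h; case: (boolP (h \in G')) => hG; last by exists 0.
    by have [h' h'G e] := equiv FinvK horb' Finvc (esym hcard) hG; exists h'.
  by case/choice => psi Hpsi; exists psi.
have hrank g : g \in G -> \rank (phi g - 1%:M) = \rank (g - 1%:M).
  move=> gG; apply/eqP; rewrite eqn_leq.
  rewrite (rank_le FK FinvK (dF 0) (dFinv (F 0)) (Hphi g gG).2) /=.
  apply: (rank_le FinvK FK (dFinv 0) (dF (Finv 0))) => y.
  by rewrite (Hpsi _ (Hphi g gG).1).2 (phiK FK Hphi Hpsi gG).
have hrank' h : h \in G' -> \rank (psi h - 1%:M) = \rank (h - 1%:M).
  move=> hG; apply/eqP; rewrite eqn_leq.
  rewrite (rank_le FinvK FK (dFinv 0) (dF (Finv 0)) (Hpsi h hG).2) /=.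
  apply: (rank_le FK FinvK (dF 0) (dFinv (F 0))) => x.
  by rewrite (Hphi _ (Hpsi h hG).1).2 (psiK FinvK Hphi Hpsi hG).
split; [split|].
- exact: (strata_fwd hGG hGG' FK FinvK Hphi Hpsi).
- move=> S' HS'; exists (induced_map Finv @` S').
    exact: (strata_fwd hGG' hGG FinvK FK Hpsi Hphi).
  by rewrite (@imK _ _ (induced_map Finv) (induced_map F) S' (fun O => @imK _ _ Finv F O FinvK)).
- move=> T _; rewrite /refl_divisor; congr xget.
  apply/seteqP; split => e He.
    have := div_fwd hGG' FinvK FK Hpsi Hphi hrank' He.
    by rewrite (@imK _ _ (induced_map F) (induced_map Finv) T (fun O => @imK _ _ F Finv O FK)).
  exact: (div_fwd hGG FK FinvK Hphi Hpsi hrank He).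
Qed.
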